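(* Let $m\ge 2$ and $1\le k\le m$. For $y\in\mathcal{Y}$ and $g\in\mathbb{R}^m$ define the truncated top-$k$ entropy loss $$L(y,g)=\log\Big(1+\sum_{j\in\mathcal{J}_y(g)}\exp(g_j-g_y)\Big),$$ where $\mathcal{J}_y(g)$ is a set of indices of $m-k$ smallest components of $(g_j)_{j\ne y}$ (the value of $L$ does not depend on how ties are broken). Then $L$ is top-$s$ calibrated for every $s$ with $k\le s\le m$.
   Context: Classes $\mathcal{Y}=\{1,\dots,m\}$. Top-$s$ error: $\mathrm{err}_s(y,g)=1$ if $|\{j\ne y: g_j\ge g_y\}|\ge s$ and $0$ otherwise. A loss $L:\mathcal{Y}\times\mathbb{R}^m\to\mathbb{R}$ is top-$s$ calibrated if for every probability vector $p\in\mathbb{R}^m$ with pairwise distinct coordinates, $\arg\min_{g\in\mathbb{R}^m}\sum_y p_y L(y,g)\subseteq\arg\min_{g\in\mathbb{R}^m}\sum_y p_y\,\mathrm{err}_s(y,g)$ (the left set may be empty). For $k=1$ the loss is the softmax loss. *)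

(* Defs.v *)
(* classical reals (exp, ln). Classes are 0..m-1 (nat), a score
   vector g in R^m is a function nat -> R (only coordinates < m matter). *)
From Stdlib Require Import Reals List Lia Lra.
Open Scope R_scope.

Definition sumR (l : list nat) (f : nat -> R) : R :=
  fold_right (fun i acc => f i + acc) 0 l.

Definition valid_trunc_set (m k y : nat) (g : nat -> R) (J : list nat) : Prop :=
  NoDup J /\ length J = (m - k)%nat /\
  (forall j, In j J -> (j < m)%nat /\ j <> y) /\
  (forall j j', In j J -> (j' < m)%nat -> j' <> y -> ~ In j' J -> g j <= g j').

(* truncated top-k entropy loss, for a given tie-breaking choice J of J_y(g) *)
Definition trunc_topk_loss (J : nat -> (nat -> R) -> list nat)
  (y : nat) (g : nat -> R) : R :=
  ln (1 + sumR (J y g) (fun j => exp (g j - g y))).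

Definition n_above (m y : nat) (g : nat -> R) : nat :=
  length (filter (fun j => andb (negb (Nat.eqb j y))
                                (if Rle_dec (g y) (g j) then true else false))
                 (seq 0 m)).

Definition top_err (m s y : nat) (g : nat -> R) : R :=
  if Nat.leb s (n_above m y g) then 1 else 0.

Definition prob_vector (m : nat) (p : nat -> R) : Prop :=
  (forall i, (i < m)%nat -> 0 <= p i) /\ sumR (seq 0 m) p = 1.

Definition distinct_coords (m : nat) (p : nat -> R) : Prop :=
  forall i j, (i < m)%nat -> (j < m)%nat -> i <> j -> p i <> p j.

Definition is_argmin (F : (nat -> R) -> R) (g : nat -> R) : Prop :=
  forall g', F g <= F g'.

Definition cond_risk (m : nat) (L : nat -> (nat -> R) -> R) (p : nat -> R)
  (g : nat -> R) : R :=
  sumR (seq 0 m) (fun y => p y * L y g).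

Definition top_s_calibrated (m s : nat) (L : nat -> (nat -> R) -> R) : Prop :=
  forall p, prob_vector m p -> distinct_coords m p ->
  forall g, is_argmin (cond_risk m L p) g ->
            is_argmin (cond_risk m (top_err m s) p) g.

(* Main.v *)
Require Import Defs.
From Stdlib Require Import Reals List Lia Lra Classical.
Open Scope R_scope.

Lemma sumR_app l1 l2 f : sumR (l1 ++ l2) f = sumR l1 f + sumR l2 f.
Proof. induction l1; simpl; [ring| rewrite IHl1; ring]. Qed.

Lemma sumR_ext l f h : (forall x, In x l -> f x = h x) -> sumR l f = sumR l h.
Proof. induction l; simpl; intros H; auto. rewrite H by auto. rewrite IHl; auto. Qed.

Lemma sumR_le l f h : (forall x, In x l -> f x <= h x) -> sumR l f <= sumR l h.
Proof. induction l; simpl; intros H; [lra|]. specialize (IHl (fun x Hx => H x (or_intror Hx))). specialize (H a (or_introl eq_refl)). lra. Qed.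

Lemma sumR_plus l f h : sumR l (fun x => f x + h x) = sumR l f + sumR l h.
Proof. induction l; simpl; [ring| rewrite IHl; ring]. Qed.

Lemma sumR_scal l c f : sumR l (fun x => c * f x) = c * sumR l f.
Proof. induction l; simpl; [ring| rewrite IHl; ring]. Qed.

Lemma sumR_minus l f h : sumR l (fun x => f x - h x) = sumR l f - sumR l h.
Proof. induction l; simpl; [ring| rewrite IHl; ring]. Qed.

Lemma sumR_map l (h : nat -> nat) f : sumR (map h l) f = sumR l (fun x => f (h x)).
Proof. induction l; simpl; [ring| rewrite IHl; ring]. Qed.

Lemma sumR_nonneg l f : (forall x, In x l -> 0 <= f x) -> 0 <= sumR l f.
Proof. induction l; simpl; intros H; [lra|]. specialize (IHl (fun x Hx => H x (or_intror Hx))). specialize (H a (or_introl eq_refl)). lra. Qed.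

Lemma sumR_pos l f : l <> nil -> (forall x, 0 < f x) -> 0 < sumR l f.
Proof. destruct l as [|a l]; [congruence|]. intros _ H. simpl.
 assert (0 <= sumR l f) by (apply sumR_nonneg; intros; left; auto). specialize (H a). lra. Qed.

Lemma sumR_point l a C f : NoDup l -> In a l ->
  sumR l (fun x => if Nat.eqb x a then C else f x) = sumR l f + (C - f a).
Proof.
 induction l as [|b l IH]; simpl; intros Hn Hi; [contradiction|].
 inversion Hn; subst. destruct Hi as [->|Hi].
 - rewrite Nat.eqb_refl. rewrite (sumR_ext l _ f). ring.
   intros x Hx. destruct (Nat.eqb_spec x a); subst; tauto.
 - destruct (Nat.eqb_spec b a); subst; [contradiction|]. rewrite IH; auto. ring.
Qed.

Lemma sumR_point0 l a C f : ~ In a l ->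
  sumR l (fun x => if Nat.eqb x a then C else f x) = sumR l f.
Proof. intros H. apply sumR_ext. intros x Hx. destruct (Nat.eqb_spec x a); subst; tauto. Qed.

Lemma sumR_two l a b f : NoDup l -> In a l -> In b l -> a <> b ->
  sumR l f = f a + f b + sumR l (fun y => if Nat.eqb y b then 0 else if Nat.eqb y a then 0 else f y).
Proof.
 intros Hn Ha Hb Hab.
 rewrite (sumR_point l b 0 (fun y => if Nat.eqb y a then 0 else f y)); auto.
 rewrite sumR_point; auto. destruct (Nat.eqb_spec b a); [congruence|]. ring.
Qed.

Lemma sumR_indic l (P : nat -> bool) : sumR l (fun y => if P y then 1 else 0) = INR (length (filter P l)).
Proof. induction l; simpl; auto. rewrite IHl. destruct (P a); simpl length; [rewrite S_INR|]; ring. Qed.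

Lemma NoDup_map_in (h : nat -> nat) l : NoDup l -> (forall x y, In x l -> In y l -> h x = h y -> x = y) -> NoDup (map h l).
Proof.
 induction l as [|a l IH]; simpl; intros Hn Hi; constructor.
 - inversion Hn; subst. intros Hin. apply in_map_iff in Hin. destruct Hin as [x [Hx Hxl]].
   assert (x = a) by (apply Hi; auto). subst; contradiction.
 - inversion Hn; subst. apply IH; auto.
Qed.

Lemma ln_le x y : 0 < x -> x <= y -> ln x <= ln y.
Proof. intros H1 H2. destruct H2 as [H2|<-]; [left; apply ln_increasing; auto| lra]. Qed.

Lemma exp_le x y : x <= y -> exp x <= exp y.
Proof. intros [H|<-]; [left; apply exp_increasing; auto| lra]. Qed.

Lemma ln_conc x x' : 0 <= x -> 0 <= x' -> ln (1 + x') <= ln (1 + x) + (x' - x) / (1 + x).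
Proof.
 intros Hx Hx'.
 assert (Hz : 0 < (1 + x') / (1 + x)) by (apply Rdiv_lt_0_compat; lra).
 replace (1 + x') with ((1 + x) * ((1 + x') / (1 + x))) at 1 by (field; lra).
 rewrite ln_mult; [|lra|auto].
 assert (ln ((1 + x') / (1 + x)) <= (1 + x') / (1 + x) - 1).
 { pose proof (exp_ineq1_le (ln ((1 + x') / (1 + x)) )). rewrite exp_ln in H; auto.
   pose proof (exp_ineq1_le ((1 + x') / (1 + x) - 1)).
   (* ln z <= z - 1 : from z = exp(ln z) >= 1 + ln z *)
   lra. }
 replace ((x' - x) / (1 + x)) with ((1 + x') / (1 + x) - 1) by (field; lra). lra.
Qed.

Lemma exch (f : nat -> R) : forall K J, NoDup J -> NoDup K -> length J = length K ->
  (forall j j', In j J -> In j' K -> ~ In j' J -> f j <= f j') -> sumR J f <= sumR K f.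
Proof.
 induction K as [|k K IH]; intros J HJ HK Hl Hc.
 - destruct J; simpl in *; [lra| discriminate].
 - inversion HK; subst.
   destruct (classic (In k J)) as [Hk|Hk].
   + destruct (in_split _ _ Hk) as [l1 [l2 ->]].
     rewrite sumR_app; simpl.
     assert (sumR (l1 ++ l2) f <= sumR K f).
     { apply IH; auto. eapply NoDup_remove_1; eauto.
       rewrite length_app in *; simpl in *; lia.
       intros j j' Hj Hj' Hn. apply Hc; [|right; auto|].
       apply in_app_or in Hj; apply in_or_app; simpl; tauto.
       intros Hin. apply in_app_or in Hin; simpl in Hin. destruct Hin as [?|[?|?]]; subst; try tauto; apply Hn; apply in_or_app; tauto. }
     rewrite sumR_app in H. simpl. lra.
   + assert (exists j0, In j0 J /\ ~ In j0 (k :: K)) as [j0 [Hj0 Hj0']].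
     { apply NNPP; intros Hne.
       assert (incl J K).
       { intros x Hx. destruct (classic (In x K)); auto. exfalso; apply Hne. exists x; split; auto.
         simpl; intros [->|?]; tauto. }
       pose proof (NoDup_incl_length HJ H). simpl in Hl; lia. }
     destruct (in_split _ _ Hj0) as [l1 [l2 ->]].
     assert (sumR (l1 ++ l2) f <= sumR K f).
     { apply IH; auto. eapply NoDup_remove_1; eauto.
       rewrite length_app in *; simpl in *; lia.
       intros j j' Hj Hj' Hn. apply Hc; [|right; auto|].
       apply in_app_or in Hj; apply in_or_app; simpl; tauto.
       intros Hin. apply in_app_or in Hin; simpl in Hin. destruct Hin as [?|[?|?]]; subst.
       apply Hn; apply in_or_app; tauto. apply Hj0'; right; auto. apply Hn; apply in_or_app; tauto. }
     assert (f j0 <= f k). { apply Hc; auto; left; auto. }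
     rewrite sumR_app in *; simpl. lra.
Qed.

Definition vK (m k y : nat) (K : list nat) : Prop :=
  NoDup K /\ length K = (m-k)%nat /\ (forall x, In x K -> (x<m)%nat /\ x <> y).
Definition eg (g : nat -> R) := fun j => exp (g j).
Definition Phi (g : nat -> R) (y : nat) (K : list nat) := exp (- g y) * sumR K (eg g).

Lemma valid_vK m k y g l : valid_trunc_set m k y g l -> vK m k y l.
Proof. intros [? [? [? ?]]]; repeat split; auto; apply H1; auto. Qed.

Lemma MIN m k y g l K : valid_trunc_set m k y g l -> vK m k y K -> sumR l (eg g) <= sumR K (eg g).
Proof.
 intros [H1 [H2 [H3 H4]]] [K1 [K2 K3]]. apply exch; auto; try congruence.
 intros j j' Hj Hj' Hn. unfold eg. apply exp_le. destruct (K3 j' Hj'). apply H4; auto.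
Qed.

Lemma L_eq (J : nat -> (nat -> R) -> list nat) y g : trunc_topk_loss J y g = ln (1 + Phi g y (J y g)).
Proof. unfold trunc_topk_loss, Phi. f_equal. f_equal. rewrite <- sumR_scal. apply sumR_ext.
 intros; unfold eg, Rminus. rewrite exp_plus. ring. Qed.

Lemma Phi_nonneg g y K : 0 <= Phi g y K.
Proof. unfold Phi. apply Rmult_le_pos. left; apply exp_pos. apply sumR_nonneg. intros; left; apply exp_pos. Qed.

Lemma L_le m k (J : nat -> (nat -> R) -> list nat) y g K :
  (forall y g, (y < m)%nat -> valid_trunc_set m k y g (J y g)) ->
  (y < m)%nat -> vK m k y K -> trunc_topk_loss J y g <= ln (1 + Phi g y K).
Proof.
 intros HJ Hy HK. rewrite L_eq. apply ln_le. pose proof (Phi_nonneg g y (J y g)); lra.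
 unfold Phi. apply Rplus_le_compat_l. apply Rmult_le_compat_l. left; apply exp_pos.
 eapply MIN; eauto.
Qed.

Lemma PT m k (J : nat -> (nat -> R) -> list nat) y g g' K p :
  (forall y g, (y < m)%nat -> valid_trunc_set m k y g (J y g)) ->
  0 <= p -> (y < m)%nat -> vK m k y K ->
  p * trunc_topk_loss J y g' - p * trunc_topk_loss J y g <=
  p * ((Phi g' y K - Phi g y (J y g)) / (1 + Phi g y (J y g))).
Proof.
 intros HJ Hp Hy HK. rewrite <- Rmult_minus_distr_l. apply Rmult_le_compat_l; auto.
 pose proof (L_le m k J y g' K HJ Hy HK). rewrite (L_eq J y g).
 pose proof (ln_conc (Phi g y (J y g)) (Phi g' y K) (Phi_nonneg _ _ _) (Phi_nonneg _ _ _)). lra.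
Qed.

Definition repl (a b : nat) (l : list nat) := map (fun x => if Nat.eqb x a then b else x) l.

Lemma repl_In a b l x : In x (repl a b l) -> x = b \/ (In x l /\ x <> a).
Proof. unfold repl. intros H. apply in_map_iff in H. destruct H as [z [<- Hz]].
 destruct (Nat.eqb_spec z a); auto. Qed.

Lemma repl_NoDup a b l : NoDup l -> ~ In b l -> NoDup (repl a b l).
Proof. intros Hn Hb. apply NoDup_map_in; auto. intros x0 y0 Hx Hy.
 destruct (Nat.eqb_spec x0 a), (Nat.eqb_spec y0 a); subst; intros; subst; auto; contradiction. Qed.

Lemma repl_vK m k y a b l : NoDup l -> length l = (m - k)%nat -> ~ In b l -> (b < m)%nat -> b <> y ->
  (forall x, In x l -> x <> a -> (x < m)%nat /\ x <> y) -> vK m k y (repl a b l).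
Proof.
 intros H1 H2 H3 H4 H5 H6. split; [|split].
 - apply repl_NoDup; auto.
 - unfold repl; rewrite length_map; auto.
 - intros x Hx; destruct (repl_In _ _ _ _ Hx) as [->|[? ?]]; [auto|apply H6; auto].
Qed.

Lemma sumR_repl a b l f : sumR (repl a b l) f = sumR l (fun x => if Nat.eqb x a then f b else f x).
Proof. unfold repl; rewrite sumR_map. apply sumR_ext; intros. destruct (Nat.eqb x a); auto. Qed.

Lemma CMP m k (J : nat -> (nat -> R) -> list nat) g i j :
  (forall y g, (y < m)%nat -> valid_trunc_set m k y g (J y g)) ->
  (i < m)%nat -> (j < m)%nat -> i <> j -> g i <= g j ->
  sumR (J j g) (eg g) <= sumR (J i g) (eg g).
Proof.
 intros HJ Hi Hj Hij Hg. destruct (HJ i g Hi) as [A1 [A2 [A3 A4]]].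
 destruct (classic (In j (J i g))) as [Hin|Hin].
 - apply Rle_trans with (sumR (repl j i (J i g)) (eg g)).
   + eapply MIN; [apply HJ; auto|]. apply repl_vK; auto.
     intros Hx. apply A3 in Hx; tauto.
     intros x Hx Hne; destruct (A3 x Hx); auto.
   + rewrite sumR_repl. rewrite sumR_point; auto. unfold eg. pose proof (exp_le _ _ Hg). lra.
 - eapply MIN; [apply HJ; auto|]. destruct (valid_vK _ _ _ _ _ (HJ i g Hi)) as [? [? ?]].
   split; [|split]; auto. intros x Hx; split. apply H1; auto. intros ->; contradiction.
Qed.

Lemma sumR_zero l f : (forall x, In x l -> f x = 0) -> sumR l f = 0.
Proof. induction l; simpl; intros H; auto. rewrite H by auto. rewrite IHl; auto. ring. Qed.

Lemma in_seq0 m y : In y (seq 0 m) <-> (y < m)%nat.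
Proof. rewrite in_seq. lia. Qed.

Lemma seq0_NoDup m : NoDup (seq 0 m).
Proof. apply seq_NoDup. Qed.

Lemma S_pos m k y g l : valid_trunc_set m k y g l -> (k < m)%nat -> 0 < sumR l (eg g).
Proof. intros [_ [H _]] Hk. apply sumR_pos. intros ->; simpl in H; lia. intros; apply exp_pos. Qed.

Lemma L_strict m k (J : nat -> (nat -> R) -> list nat) g i j :
  (forall y g, (y < m)%nat -> valid_trunc_set m k y g (J y g)) -> (k < m)%nat ->
  (i < m)%nat -> (j < m)%nat -> i <> j -> g i < g j ->
  trunc_topk_loss J j g < trunc_topk_loss J i g.
Proof.
 intros HJ Hk Hi Hj Hij Hg. rewrite !L_eq. apply ln_increasing.
 pose proof (Phi_nonneg g j (J j g)); lra.
 apply Rplus_lt_compat_l. unfold Phi.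
 pose proof (CMP m k J g i j HJ Hi Hj Hij (Rlt_le _ _ Hg)).
 pose proof (S_pos m k j g _ (HJ j g Hj) Hk).
 assert (exp (- g j) < exp (- g i)) by (apply exp_increasing; lra).
 pose proof (exp_pos (- g i)). nra.
Qed.

Definition sw (i j x : nat) := if Nat.eqb x i then j else if Nat.eqb x j then i else x.

Lemma sw_inv i j x : sw i j (sw i j x) = x.
Proof. unfold sw.
 destruct (Nat.eqb_spec x i); destruct (Nat.eqb_spec x j); subst;
 repeat (match goal with |- context [Nat.eqb ?a ?b] => destruct (Nat.eqb_spec a b) end; subst); congruence.
Qed.

Lemma sw_lt i j m x : (i < m)%nat -> (j < m)%nat -> (x < m)%nat -> (sw i j x < m)%nat.
Proof. unfold sw; destruct (Nat.eqb x i), (Nat.eqb x j); auto. Qed.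

Lemma L_swap_le m k (J : nat -> (nat -> R) -> list nat) g i j y :
  (forall y g, (y < m)%nat -> valid_trunc_set m k y g (J y g)) ->
  (i < m)%nat -> (j < m)%nat -> (y < m)%nat ->
  trunc_topk_loss J y (fun x => g (sw i j x)) <= trunc_topk_loss J (sw i j y) g.
Proof.
 intros HJ Hi Hj Hy. set (y' := sw i j y).
 assert (Hy' : (y' < m)%nat) by (apply sw_lt; auto).
 destruct (HJ y' g Hy') as [A1 [A2 [A3 A4]]].
 eapply Rle_trans. apply (L_le m k J y _ (map (sw i j) (J y' g)) HJ Hy).
 - split; [|split].
   + apply NoDup_map_in; auto. intros a b _ _ H. rewrite <- (sw_inv i j a), H, sw_inv; auto.
   + rewrite length_map; auto.
   + intros x Hx. apply in_map_iff in Hx. destruct Hx as [z [<- Hz]]. destruct (A3 z Hz).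
     split. apply sw_lt; auto. intros He. apply H0. unfold y'. rewrite <- He, sw_inv; auto.
 - rewrite L_eq. right. f_equal. f_equal. unfold Phi. f_equal. rewrite sumR_map.
   apply sumR_ext. intros; unfold eg; rewrite sw_inv; auto.
Qed.

Lemma swap_step m k (J : nat -> (nat -> R) -> list nat) p g i j :
  (forall y g, (y < m)%nat -> valid_trunc_set m k y g (J y g)) -> (k < m)%nat ->
  (forall y, (y < m)%nat -> 0 <= p y) ->
  is_argmin (cond_risk m (trunc_topk_loss J) p) g ->
  (i < m)%nat -> (j < m)%nat -> i <> j -> p j < p i -> ~ g i < g j.
Proof.
 intros HJ Hk Hp Hmin Hi Hj Hij Hpij Hg.
 specialize (Hmin (fun x => g (sw i j x))). unfold cond_risk in Hmin.
 assert (H1 : sumR (seq 0 m) (fun y => p y * trunc_topk_loss J y (fun x => g (sw i j x)))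
   <= sumR (seq 0 m) (fun y => p y * trunc_topk_loss J (sw i j y) g)).
 { apply sumR_le. intros y Hy. apply in_seq0 in Hy. apply Rmult_le_compat_l; auto. apply (L_swap_le m k); auto. }
 assert (H2 : sumR (seq 0 m) (fun y => p y * trunc_topk_loss J (sw i j y) g - p y * trunc_topk_loss J y g) < 0).
 { rewrite (sumR_two _ i j); auto using seq0_NoDup; try (apply in_seq0; auto).
   rewrite sumR_zero. unfold sw. rewrite !Nat.eqb_refl. destruct (Nat.eqb_spec j i); [congruence|].
   pose proof (L_strict m k J g i j HJ Hk Hi Hj Hij Hg). nra.
   intros x Hx. destruct (Nat.eqb_spec x j); auto. destruct (Nat.eqb_spec x i); auto.
   unfold sw. destruct (Nat.eqb_spec x i); [congruence|]. destruct (Nat.eqb_spec x j); [congruence|]. ring. }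
 rewrite sumR_minus in H2. lra.
Qed.

Lemma D_gen m k (J : nat -> (nat -> R) -> list nat) y g g' K p d e :
  (forall y g, (y < m)%nat -> valid_trunc_set m k y g (J y g)) ->
  0 <= p -> (y < m)%nat -> vK m k y K ->
  sumR K (eg g') = sumR (J y g) (eg g) + d -> g' y = g y + e ->
  p * trunc_topk_loss J y g' - p * trunc_topk_loss J y g <=
  p * ((exp (- e) * (Phi g y (J y g) + exp (- g y) * d) - Phi g y (J y g)) / (1 + Phi g y (J y g))).
Proof.
 intros HJ Hp Hy HK Hs He.
 assert (Phi g' y K = exp (- e) * (Phi g y (J y g) + exp (- g y) * d)).
 { unfold Phi. rewrite Hs, He, Ropp_plus_distr, exp_plus. ring. }
 rewrite <- H. apply (PT m k); auto.
Qed.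

Lemma exists_E pa pb : 0 <= pb -> pb < pa -> exists E, 1 < E /\ E * E * pb < pa.
Proof.
 intros H1 H2. exists (1 + (pa - pb) / (3 * (pa + pb))).
 assert (0 < (pa - pb) / (3 * (pa + pb))) by (apply Rdiv_lt_0_compat; lra).
 assert ((pa - pb) / (3 * (pa + pb)) * (3 * (pa + pb)) = pa - pb) by (field; lra).
 split. lra. set (u := (pa - pb) / (3 * (pa + pb))) in *.
 assert (u <= 1/3). { assert (u * (3 * (pa+pb)) <= 1/3 * (3 * (pa + pb))) by nra. nra. }
 nra.
Qed.

Lemma D0 m k (J : nat -> (nat -> R) -> list nat) y g g' K p d :
  (forall y g, (y < m)%nat -> valid_trunc_set m k y g (J y g)) ->
  0 <= p -> (y < m)%nat -> vK m k y K ->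
  sumR K (eg g') = sumR (J y g) (eg g) + d -> g' y = g y ->
  p * trunc_topk_loss J y g' - p * trunc_topk_loss J y g <=
  (p * exp (- g y) / (1 + Phi g y (J y g))) * d.
Proof.
 intros HJ Hp Hy HK Hs He. eapply Rle_trans. apply (D_gen m k J y g g' K p d 0); auto. rewrite He; ring.
 right. rewrite Ropp_0, exp_0. pose proof (Phi_nonneg g y (J y g)). field. lra.
Qed.

Lemma vK_J m k (J : nat -> (nat -> R) -> list nat) y g :
  (forall y g, (y < m)%nat -> valid_trunc_set m k y g (J y g)) -> (y < m)%nat -> vK m k y (J y g).
Proof. intros HJ Hy. apply (valid_vK m k y g). auto. Qed.

Lemma notin_self m k (J : nat -> (nat -> R) -> list nat) y g :
  (forall y g, (y < m)%nat -> valid_trunc_set m k y g (J y g)) -> (y < m)%nat -> ~ In y (J y g).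
Proof. intros HJ Hy Hin. destruct (HJ y g Hy) as [_ [_ [H _]]]. apply H in Hin. tauto. Qed.

Definition up (g : nat -> R) a E := fun x => if Nat.eqb x a then g a + ln E else g x.
Definition dn (g : nat -> R) b E := fun x => if Nat.eqb x b then g b - ln E else g x.

Lemma eg_up g a E x : 0 < E -> eg (up g a E) x = if Nat.eqb x a then exp (g a) * E else eg g x.
Proof. intros HE. unfold eg, up. destruct (Nat.eqb_spec x a); subst; auto. rewrite exp_plus, exp_ln; auto. Qed.

Lemma eg_dn g b E x : 0 < E -> eg (dn g b E) x = if Nat.eqb x b then exp (g b) / E else eg g x.
Proof. intros HE. unfold eg, dn. destruct (Nat.eqb_spec x b); subst; auto.
 unfold Rminus; rewrite exp_plus, exp_Ropp, exp_ln; auto. Qed.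

Lemma sum_up_in g a E l : 0 < E -> NoDup l -> In a l ->
  sumR l (eg (up g a E)) = sumR l (eg g) + (exp (g a) * E - exp (g a)).
Proof. intros HE Hn Hi. rewrite (sumR_ext _ _ (fun x => if Nat.eqb x a then exp (g a) * E else eg g x)).
 rewrite sumR_point; auto. intros; apply eg_up; auto. Qed.

Lemma sum_up_out g a E l : 0 < E -> ~ In a l -> sumR l (eg (up g a E)) = sumR l (eg g) + 0.
Proof. intros HE Hi. rewrite (sumR_ext _ _ (fun x => if Nat.eqb x a then exp (g a) * E else eg g x)).
 rewrite sumR_point0; auto. ring. intros; apply eg_up; auto. Qed.

Lemma sum_dn_in g b E l : 0 < E -> NoDup l -> In b l ->
  sumR l (eg (dn g b E)) = sumR l (eg g) + (exp (g b) / E - exp (g b)).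
Proof. intros HE Hn Hi. rewrite (sumR_ext _ _ (fun x => if Nat.eqb x b then exp (g b) / E else eg g x)).
 rewrite sumR_point; auto. intros; apply eg_dn; auto. Qed.

Lemma sum_dn_out g b E l : 0 < E -> ~ In b l -> sumR l (eg (dn g b E)) = sumR l (eg g) + 0.
Proof. intros HE Hi. rewrite (sumR_ext _ _ (fun x => if Nat.eqb x b then exp (g b) / E else eg g x)).
 rewrite sumR_point0; auto. ring. intros; apply eg_dn; auto. Qed.

Lemma sum_up_repl g a b E l : 0 < E -> a <> b -> g a = g b -> NoDup l -> In a l -> ~ In b l ->
  sumR (repl a b l) (eg (up g a E)) = sumR l (eg g) + 0.
Proof. intros HE Hab Hg Hn Hi Hb. rewrite sumR_repl.
 rewrite (sumR_ext _ _ (fun x => if Nat.eqb x a then eg g a else eg g x)).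
 rewrite sumR_point; auto. ring.
 intros x Hx. rewrite !eg_up; auto. destruct (Nat.eqb_spec b a); [congruence|].
 destruct (Nat.eqb_spec x a); auto. unfold eg; rewrite Hg; auto.
Qed.

Lemma sum_dn_repl g a b E l : 0 < E -> a <> b -> g a = g b -> NoDup l -> In a l -> ~ In b l ->
  sumR (repl a b l) (eg (dn g b E)) = sumR l (eg g) + (exp (g b) / E - exp (g b)).
Proof. intros HE Hab Hg Hn Hi Hb. rewrite sumR_repl.
 rewrite (sumR_ext _ _ (fun x => if Nat.eqb x a then exp (g b) / E else eg g x)).
 rewrite sumR_point; auto. unfold eg; rewrite Hg; auto.
 intros x Hx. rewrite !eg_dn; auto. rewrite Nat.eqb_refl.
 destruct (Nat.eqb_spec x a); auto. destruct (Nat.eqb_spec x b); auto. subst; contradiction.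
Qed.

Lemma rest_term m k (J : nat -> (nat -> R) -> list nat) g a b E p y :
  (forall y g, (y < m)%nat -> valid_trunc_set m k y g (J y g)) ->
  (a < m)%nat -> (b < m)%nat -> a <> b -> g a = g b -> 1 < E -> 0 <= p ->
  (y < m)%nat -> y <> a -> y <> b ->
  E * (p * trunc_topk_loss J y (up g a E) - p * trunc_topk_loss J y g) +
  E * E * (p * trunc_topk_loss J y (dn g b E) - p * trunc_topk_loss J y g) <= 0.
Proof.
 intros HJ Ha Hb Hab Hg HE Hp Hy Hya Hyb.
 assert (HE0 : 0 < E) by lra.
 pose proof (vK_J m k J y g HJ Hy) as HK. destruct (HJ y g Hy) as [N1 [N2 [N3 N4]]].
 assert (Hu : up g a E y = g y) by (unfold up; destruct (Nat.eqb_spec y a); congruence).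
 assert (Hd : dn g b E y = g y) by (unfold dn; destruct (Nat.eqb_spec y b); congruence).
 set (Q := p * exp (- g y) / (1 + Phi g y (J y g))).
 assert (HQ : 0 <= Q). { unfold Q. pose proof (Phi_nonneg g y (J y g)). pose proof (exp_pos (- g y)).
   apply Rmult_le_pos. nra. left; apply Rinv_0_lt_compat; lra. }
 pose proof (exp_pos (g a)).
 destruct (classic (In b (J y g))) as [Hbin|Hbin].
 - assert (H2 : p * trunc_topk_loss J y (dn g b E) - p * trunc_topk_loss J y g <= Q * (exp (g b) / E - exp (g b))).
   { apply (D0 m k J y g _ (J y g)); auto. apply sum_dn_in; auto. }
   assert (H1 : p * trunc_topk_loss J y (up g a E) - p * trunc_topk_loss J y g <= Q * (exp (g a) * E - exp (g a))).
   { destruct (classic (In a (J y g))) as [Hain|Hain].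
     - apply (D0 m k J y g _ (J y g)); auto. apply sum_up_in; auto.
     - eapply Rle_trans. apply (D0 m k J y g _ (J y g) p 0); auto. apply sum_up_out; auto.
       rewrite Rmult_0_r. apply Rmult_le_pos; auto. nra. }
   rewrite <- Hg in H2.
   assert (E * (Q * (exp (g a) * E - exp (g a))) + E * E * (Q * (exp (g a) / E - exp (g a))) = 0) by (field; lra).
   nra.
 - assert (H1 : p * trunc_topk_loss J y (up g a E) - p * trunc_topk_loss J y g <= Q * 0).
   { destruct (classic (In a (J y g))) as [Hain|Hain].
     - apply (D0 m k J y g _ (repl a b (J y g))); auto.
       apply repl_vK; [auto|auto|auto|auto|auto| intros x Hx _; apply N3; auto].
       apply sum_up_repl; auto.
     - apply (D0 m k J y g _ (J y g)); auto. apply sum_up_out; auto. }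
   assert (H2 : p * trunc_topk_loss J y (dn g b E) - p * trunc_topk_loss J y g <= Q * 0).
   { destruct (classic (In a (J y g))) as [Hain|Hain].
     - eapply Rle_trans. apply (D0 m k J y g _ (repl a b (J y g)) p (exp (g b) / E - exp (g b))); auto.
       apply repl_vK; [auto|auto|auto|auto|auto| intros x Hx _; apply N3; auto].
       apply sum_dn_repl; auto.
       apply Rmult_le_compat_l; auto. rewrite <- Hg.
       assert (exp (g a) / E <= exp (g a)). { apply Rmult_le_reg_r with E; auto. field_simplify; nra. }
       lra.
     - apply (D0 m k J y g _ (J y g)); auto. apply sum_dn_out; auto. }
   nra.
Qed.

Lemma pair_term m k (J : nat -> (nat -> R) -> list nat) g a b E pa pb :
  (forall y g, (y < m)%nat -> valid_trunc_set m k y g (J y g)) -> (k < m)%nat ->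
  (a < m)%nat -> (b < m)%nat -> a <> b -> g a = g b -> 1 < E -> 0 <= pb -> E * E * pb < pa ->
  E * (pa * trunc_topk_loss J a (up g a E) - pa * trunc_topk_loss J a g) +
  E * E * (pa * trunc_topk_loss J a (dn g b E) - pa * trunc_topk_loss J a g) +
  (E * (pb * trunc_topk_loss J b (up g a E) - pb * trunc_topk_loss J b g) +
   E * E * (pb * trunc_topk_loss J b (dn g b E) - pb * trunc_topk_loss J b g)) < 0.
Proof.
 intros HJ Hk Ha Hb Hab Hg HE Hpb Hpab.
 assert (HE0 : 0 < E) by lra.
 assert (Hpa : 0 < pa) by nra.
 assert (HS : sumR (J a g) (eg g) = sumR (J b g) (eg g)).
 { apply Rle_antisym; apply (CMP m k); auto; lra. }
 set (X := Phi g a (J a g)).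
 assert (HX : Phi g b (J b g) = X). { unfold X, Phi. rewrite HS, Hg; auto. }
 assert (HXp : 0 < X). { unfold X, Phi. apply Rmult_lt_0_compat. apply exp_pos. apply (S_pos m k a g); auto. }
 set (ea := exp (g a)).
 assert (Hea : 0 < ea) by apply exp_pos.
 assert (Hema : exp (- g a) = / ea) by (unfold ea; apply exp_Ropp).
 assert (Hemb : exp (- g b) = / ea) by (rewrite <- Hg; auto).
 pose proof (vK_J m k J a g HJ Ha) as HKa. pose proof (vK_J m k J b g HJ Hb) as HKb.
 pose proof (notin_self m k J a g HJ Ha) as Naa. pose proof (notin_self m k J b g HJ Hb) as Nbb.
 assert (Hua : up g a E a = g a + ln E) by (unfold up; rewrite Nat.eqb_refl; auto).
 assert (Hub : up g a E b = g b) by (unfold up; destruct (Nat.eqb_spec b a); congruence).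
 assert (Hda : dn g b E a = g a) by (unfold dn; destruct (Nat.eqb_spec a b); congruence).
 assert (Hdb : dn g b E b = g b + - ln E) by (unfold dn; rewrite Nat.eqb_refl; auto).
 assert (D1a : pa * trunc_topk_loss J a (up g a E) - pa * trunc_topk_loss J a g <= - (pa * X * (E - 1) / E) / (1 + X)).
 { eapply Rle_trans. apply (D_gen m k J a g _ (J a g) pa 0 (ln E)); auto. lra. apply sum_up_out; auto.
   right. fold X. rewrite exp_Ropp, exp_ln; auto. field. lra. }
 assert (D2b : pb * trunc_topk_loss J b (dn g b E) - pb * trunc_topk_loss J b g <= (pb * X * (E - 1)) / (1 + X)).
 { eapply Rle_trans. apply (D_gen m k J b g _ (J b g) pb 0 (- ln E)); auto. apply sum_dn_out; auto.
   right. rewrite HX, Ropp_involutive, exp_ln; auto. field. lra. }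
 destruct (classic (In a (J b g))) as [Hab_in|Hab_in].
 - assert (D2a : pa * trunc_topk_loss J a (dn g b E) - pa * trunc_topk_loss J a g <= - (pa * (E - 1) / E) / (1 + X)).
   { destruct (classic (In b (J a g))) as [Hba|Hba].
     - eapply Rle_trans. apply (D0 m k J a g _ (J a g) pa (exp (g b) / E - exp (g b))); auto; try lra.
       destruct HKa; apply sum_dn_in; auto.
       right. fold X. rewrite Hema, <- Hg. fold ea. field. split; lra.
     - eapply Rle_trans. apply (D0 m k J a g _ (repl a b (J b g)) pa (exp (g b) / E - exp (g b))); auto; try lra.
       destruct HKb as [B1 [B2 B3]]. apply repl_vK; auto.
       intros x Hx Hxa. split; [apply B3; auto| auto].
       rewrite HS. destruct HKb. apply sum_dn_repl; auto.
       right. fold X. rewrite Hema, <- Hg. fold ea. field. split; lra. }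
   assert (D1b : pb * trunc_topk_loss J b (up g a E) - pb * trunc_topk_loss J b g <= (pb * (E - 1)) / (1 + X)).
   { eapply Rle_trans. apply (D0 m k J b g _ (J b g) pb (exp (g a) * E - exp (g a))); auto.
     destruct HKb; apply sum_up_in; auto.
     right. rewrite HX, Hemb. fold ea. field. split; lra. }
   assert (HZ : 0 < / (1 + X)) by (apply Rinv_0_lt_compat; lra).
   assert (Hb1 : E * E * pb * X < pa * X) by (apply Rmult_lt_compat_r; auto).
   assert (Hb2 : 0 <= pb * E * (E - 1)) by (apply Rmult_le_pos; [apply Rmult_le_pos|]; lra).
   assert (Hb3 : 0 <= pa * (E - 1)) by (apply Rmult_le_pos; lra).
   assert (Hbr : - pa * X - pa * E + pb * E + pb * X * E * E < 0) by nra.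
   assert (E * (- (pa * X * (E - 1) / E) / (1 + X)) + E * E * (- (pa * (E - 1) / E) / (1 + X))
     + (E * ((pb * (E - 1)) / (1 + X)) + E * E * ((pb * X * (E - 1)) / (1 + X)))
     = (E - 1) * / (1 + X) * (- pa * X - pa * E + pb * E + pb * X * E * E)) by (field; lra).
   assert ((E - 1) * / (1 + X) * (- pa * X - pa * E + pb * E + pb * X * E * E) < 0).
   { assert (0 < (E - 1) * / (1 + X)) by (apply Rmult_lt_0_compat; lra).
     nra. }
   nra.
 - assert (D2a : pa * trunc_topk_loss J a (dn g b E) - pa * trunc_topk_loss J a g <= 0).
   { destruct (classic (In b (J a g))) as [Hba|Hba].
     - eapply Rle_trans. apply (D0 m k J a g _ (J a g) pa (exp (g b) / E - exp (g b))); auto; try lra.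
       destruct HKa; apply sum_dn_in; auto.
       assert (0 <= pa * exp (- g a) / (1 + X)).
       { pose proof (exp_pos (- g a)). apply Rmult_le_pos. nra. left; apply Rinv_0_lt_compat; lra. }
       assert (exp (g b) / E <= exp (g b)). { pose proof (exp_pos (g b)). apply Rmult_le_reg_r with E; auto. field_simplify; nra. }
       fold X. nra.
     - eapply Rle_trans. apply (D0 m k J a g _ (J a g) pa 0); auto; try lra. apply sum_dn_out; auto. lra. }
   assert (D1b : pb * trunc_topk_loss J b (up g a E) - pb * trunc_topk_loss J b g <= 0).
   { eapply Rle_trans. apply (D0 m k J b g _ (J b g) pb 0); auto. apply sum_up_out; auto. lra. }
   assert (HZ : 0 < / (1 + X)) by (apply Rinv_0_lt_compat; lra).
   assert (E * (- (pa * X * (E - 1) / E) / (1 + X)) + E * E * ((pb * X * (E - 1)) / (1 + X))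
     = (E - 1) * / (1 + X) * X * (- pa + pb * E * E)) by (field; lra).
   assert ((E - 1) * / (1 + X) * X * (- pa + pb * E * E) < 0).
   { assert (0 < (E - 1) * / (1 + X) * X) by (apply Rmult_lt_0_compat; [apply Rmult_lt_0_compat; lra|lra]). nra. }
   nra.
Qed.

Lemma tie_step m k (J : nat -> (nat -> R) -> list nat) p g a b :
  (forall y g, (y < m)%nat -> valid_trunc_set m k y g (J y g)) -> (k < m)%nat ->
  (forall y, (y < m)%nat -> 0 <= p y) ->
  is_argmin (cond_risk m (trunc_topk_loss J) p) g ->
  (a < m)%nat -> (b < m)%nat -> a <> b -> p b < p a -> g a <> g b.
Proof.
 intros HJ Hk Hp Hmin Ha Hb Hab Hpab Hg.
 destruct (exists_E (p a) (p b)) as [E [HE HE2]]; auto.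
 pose proof (Hmin (up g a E)) as M1. pose proof (Hmin (dn g b E)) as M2. unfold cond_risk in *.
 set (T := fun y => E * (p y * trunc_topk_loss J y (up g a E) - p y * trunc_topk_loss J y g) +
   E * E * (p y * trunc_topk_loss J y (dn g b E) - p y * trunc_topk_loss J y g)).
 assert (H0 : 0 <= sumR (seq 0 m) T).
 { unfold T. rewrite sumR_plus, !sumR_scal, !sumR_minus.
   assert (0 < E) by lra. apply Rplus_le_le_0_compat; apply Rmult_le_pos; try nra. all: idtac. }
 rewrite (sumR_two _ a b) in H0; auto using seq0_NoDup; try (apply in_seq0; auto).
 assert (H1 : sumR (seq 0 m) (fun y => if Nat.eqb y b then 0 else if Nat.eqb y a then 0 else T y) <= 0).
 { apply Rle_trans with (sumR (seq 0 m) (fun _ => 0)); [|right; apply sumR_zero; auto].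
   apply sumR_le. intros y Hy. apply in_seq0 in Hy.
   destruct (Nat.eqb_spec y b); [lra|]. destruct (Nat.eqb_spec y a); [lra|].
   unfold T. apply (rest_term m k J g a b E); auto. }
 pose proof (pair_term m k J g a b E (p a) (p b) HJ Hk Ha Hb Hab Hg HE (Hp b Hb) HE2).
 assert (T a + T b < 0) by (unfold T; lra). lra.
Qed.

Lemma min_exists (f : nat -> R) l : l <> nil -> exists x, In x l /\ forall y, In y l -> f x <= f y.
Proof.
 induction l as [|a l IH]; intros H; [congruence|].
 destruct l as [|b l'].
 - exists a; split; [left; auto|]. intros y [<-|[]]; lra.
 - destruct IH as [x [Hx Hm]]; [discriminate|].
   destruct (Rle_dec (f a) (f x)).
   + exists a; split; [left; auto|]. intros y [<-|Hy]; [lra|]. specialize (Hm y Hy); lra.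
   + exists x; split; [right; auto|]. intros y [<-|Hy]; [lra|]. auto.
Qed.

Definition Pab (m : nat) (h : nat -> R) (y : nat) := fun j => andb (negb (Nat.eqb j y))
                                (if Rle_dec (h y) (h j) then true else false).

Lemma n_above_eq m y h : n_above m y h = length (filter (Pab m h y) (seq 0 m)).
Proof. reflexivity. Qed.

Lemma Pab_true m h y j : Pab m h y j = true <-> j <> y /\ h y <= h j.
Proof. unfold Pab. destruct (Nat.eqb_spec j y), (Rle_dec (h y) (h j)); simpl; split; intuition; try discriminate. Qed.

Lemma filter_In' (P : nat -> bool) l x : In x (filter P l) <-> In x l /\ P x = true.
Proof. apply filter_In. Qed.

Lemma count_le m s h : (1 <= s)%nat ->
  (length (filter (fun y => Nat.ltb (n_above m y h) s) (seq 0 m)) <= s)%nat.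
Proof.
 intros Hs. set (Z := filter (fun y => Nat.ltb (n_above m y h) s) (seq 0 m)).
 destruct Z as [|z0 Z'] eqn:EZ; [simpl; lia|].
 rewrite <- EZ. destruct (min_exists h Z) as [y0 [Hy0 Hmin]]; [rewrite EZ; discriminate|].
 assert (HN : NoDup Z) by (apply NoDup_filter, seq_NoDup).
 assert (incl Z (y0 :: filter (Pab m h y0) (seq 0 m))).
 { intros x Hx. destruct (Nat.eq_dec x y0); [left; auto|right].
   apply filter_In'. split. unfold Z in Hx; apply filter_In' in Hx; tauto.
   apply Pab_true. split; auto. }
 pose proof (NoDup_incl_length HN H). simpl in H0.
 unfold Z in Hy0. apply filter_In' in Hy0. destruct Hy0 as [_ Hy0]. apply Nat.ltb_lt in Hy0.
 rewrite n_above_eq in Hy0. fold Z in H0. lia.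
Qed.

Lemma filter_compl (P : nat -> bool) l : (length (filter P l) + length (filter (fun y => negb (P y)) l) = length l)%nat.
Proof. induction l; simpl; auto. destruct (P a); simpl; lia. Qed.

Lemma sep m s p x y : distinct_coords m p -> (x < m)%nat -> (y < m)%nat ->
  (n_above m y p < s)%nat -> (s <= n_above m x p)%nat -> p x < p y.
Proof.
 intros Hd Hx Hy H1 H2.
 assert (Hxy : x <> y) by (intros ->; lia).
 destruct (Rlt_le_dec (p x) (p y)) as [|Hle]; auto. exfalso.
 assert (Hlt : p y < p x). { destruct Hle; auto. exfalso; apply (Hd y x); auto. }
 assert (incl (x :: filter (Pab m p x) (seq 0 m)) (filter (Pab m p y) (seq 0 m))).
 { intros j [<-|Hj].
   - apply filter_In'; split. apply in_seq0; auto. apply Pab_true; split; auto; lra.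
   - apply filter_In' in Hj. destruct Hj as [Hj1 Hj2]. apply Pab_true in Hj2.
     apply filter_In'; split; auto. apply Pab_true; split; [intros ->; lra| lra]. }
 assert (NoDup (x :: filter (Pab m p x) (seq 0 m))).
 { constructor. intros Hin. apply filter_In' in Hin. destruct Hin as [_ Hin]. apply Pab_true in Hin. tauto.
   apply NoDup_filter, seq_NoDup. }
 pose proof (NoDup_incl_length H0 H). simpl in H3. rewrite !n_above_eq in *. lia.
Qed.

Lemma count_ge m s p : distinct_coords m p -> (s <= m)%nat ->
  (s <= length (filter (fun y => Nat.ltb (n_above m y p) s) (seq 0 m)))%nat.
Proof.
 intros Hd Hs. set (P := fun y => Nat.ltb (n_above m y p) s).
 pose proof (filter_compl P (seq 0 m)). rewrite length_seq in H.
 set (W := filter (fun y => negb (P y)) (seq 0 m)) in *.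
 destruct W as [|w0 W'] eqn:EW; [simpl in H; lia|]. rewrite <- EW in *.
 destruct (min_exists (fun y => - p y) W) as [x [Hx Hmax]]; [rewrite EW; discriminate|].
 unfold W in Hx. apply filter_In' in Hx. destruct Hx as [Hx1 Hx2]. apply in_seq0 in Hx1.
 unfold P in Hx2. apply Bool.negb_true_iff, Nat.ltb_ge in Hx2.
 assert (incl (filter (Pab m p x) (seq 0 m)) (filter P (seq 0 m))).
 { intros j Hj. apply filter_In' in Hj. destruct Hj as [Hj1 Hj2]. apply Pab_true in Hj2.
   apply filter_In'; split; auto.
   destruct (P j) eqn:EP; auto. exfalso.
   assert (In j W) by (apply filter_In'; split; auto; rewrite EP; auto).
   specialize (Hmax j H0). apply in_seq0 in Hj1.
   assert (p j = p x) by lra. apply (Hd j x); tauto. }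
 pose proof (NoDup_incl_length (NoDup_filter _ (seq_NoDup m 0)) H0). rewrite n_above_eq in Hx2. lia.
Qed.

Lemma n_above_lt m y h : (y < m)%nat -> (n_above m y h < m)%nat.
Proof.
 intros Hy. rewrite n_above_eq.
 assert (incl (y :: filter (Pab m h y) (seq 0 m)) (seq 0 m)).
 { intros j [<-|Hj]. apply in_seq0; auto. apply filter_In' in Hj; tauto. }
 assert (NoDup (y :: filter (Pab m h y) (seq 0 m))).
 { constructor. intros Hin. apply filter_In' in Hin. destruct Hin as [_ Hin]. apply Pab_true in Hin. tauto.
   apply NoDup_filter, seq_NoDup. }
 pose proof (NoDup_incl_length H0 H). simpl in H1. rewrite length_seq in H1. lia.
Qed.

Definition zz m s h y : R := if Nat.ltb (n_above m y h) s then 1 else 0.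

Lemma top_err_z m s y h : top_err m s y h = 1 - zz m s h y.
Proof. unfold top_err, zz. destruct (Nat.leb_spec s (n_above m y h)), (Nat.ltb_spec (n_above m y h) s); try lia; ring. Qed.

Lemma topB m s p h : (1 <= s)%nat -> (s <= m)%nat -> distinct_coords m p ->
  (forall y, (y < m)%nat -> 0 <= p y) ->
  sumR (seq 0 m) (fun y => p y * zz m s h y) <= sumR (seq 0 m) (fun y => p y * zz m s p y).
Proof.
 intros Hs1 Hsm Hd Hp.
 set (Z := filter (fun y => Nat.ltb (n_above m y p) s) (seq 0 m)).
 pose proof (count_ge m s p Hd Hsm) as Hge. fold Z in Hge.
 pose proof (count_le m s h Hs1) as Hle.
 destruct (min_exists p Z) as [y0 [Hy0 Hmin]]. { intros E; rewrite E in Hge; simpl in Hge; lia. }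
 unfold Z in Hy0. apply filter_In' in Hy0. destruct Hy0 as [Hy0m Hy0z]. apply in_seq0 in Hy0m.
 apply Nat.ltb_lt in Hy0z.
 set (th := p y0). assert (Hth : 0 <= th) by (apply Hp; auto).
 apply Rle_trans with (sumR (seq 0 m) (fun y => (p y - th) * zz m s p y + th * zz m s h y)).
 { apply sumR_le. intros y Hy. apply in_seq0 in Hy. unfold zz.
   destruct (Nat.ltb_spec (n_above m y p) s) as [Hz|Hz].
   - assert (th <= p y).
     { apply Hmin. apply filter_In'. split. apply in_seq0; auto. apply Nat.ltb_lt; auto. }
     destruct (Nat.ltb (n_above m y h) s); lra.
   - assert (p y < th) by (apply (sep m s p y y0); auto).
     destruct (Nat.ltb (n_above m y h) s); lra. }
 rewrite sumR_plus, sumR_scal.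
 assert (sumR (seq 0 m) (zz m s h) <= INR s).
 { unfold zz. rewrite sumR_indic. apply le_INR. auto. }
 assert (INR s <= sumR (seq 0 m) (zz m s p)).
 { unfold zz. rewrite sumR_indic. apply le_INR. auto. }
 assert (sumR (seq 0 m) (fun y => (p y - th) * zz m s p y) = sumR (seq 0 m) (fun y => p y * zz m s p y) - th * sumR (seq 0 m) (zz m s p)).
 { rewrite <- sumR_scal, <- sumR_minus. apply sumR_ext; intros; ring. }
 assert (sumR (seq 0 m) (fun x => zz m s h x) = sumR (seq 0 m) (zz m s h)) by auto.
 rewrite H1. nra.
Qed.

Theorem proposition9 (m k : nat) (J : nat -> (nat -> R) -> list nat) :
  (2 <= m)%nat -> (1 <= k <= m)%nat ->
  (forall y g, (y < m)%nat -> valid_trunc_set m k y g (J y g)) ->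
  forall s : nat, (k <= s <= m)%nat ->
  top_s_calibrated m s (trunc_topk_loss J).
Proof.
 intros Hm Hk HJ s Hs p [Hp Hsum] Hd g Hmin g'.
 unfold is_argmin, cond_risk.
 assert (Herr0 : forall y h, 0 <= top_err m s y h) by (intros; unfold top_err; destruct (Nat.leb s _); lra).
 assert (HRnn : forall h, 0 <= sumR (seq 0 m) (fun y => p y * top_err m s y h)).
 { intros h. apply sumR_nonneg. intros y Hy. apply in_seq0 in Hy. apply Rmult_le_pos; auto. }
 destruct (Nat.eq_dec s m) as [->|Hsm].
 - rewrite sumR_zero; auto. intros y Hy. apply in_seq0 in Hy. unfold top_err.
   pose proof (n_above_lt m y g Hy). destruct (Nat.leb_spec m (n_above m y g)); [lia|ring].
 - assert (Hkm : (k < m)%nat) by lia.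
   assert (Hord : forall i j, (i < m)%nat -> (j < m)%nat -> p j < p i -> g j < g i).
   { intros i j Hi Hj Hpij.
     assert (i <> j) by (intros ->; lra).
     pose proof (swap_step m k J p g i j HJ Hkm Hp Hmin Hi Hj H Hpij).
     pose proof (tie_step m k J p g i j HJ Hkm Hp Hmin Hi Hj H Hpij).
     destruct (Rtotal_order (g i) (g j)) as [?|[?|?]]; tauto. }
   assert (Hn : forall y, (y < m)%nat -> n_above m y g = n_above m y p).
   { intros y Hy. rewrite !n_above_eq. f_equal. apply filter_ext_in. intros j Hj. apply in_seq0 in Hj.
     unfold Pab. destruct (Nat.eqb_spec j y); simpl; auto.
     destruct (Rtotal_order (p y) (p j)) as [H|[H|H]].
     - pose proof (Hord j y Hj Hy H).
       destruct (Rle_dec (g y) (g j)), (Rle_dec (p y) (p j)); auto; lra.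
     - exfalso; apply (Hd y j); auto.
     - pose proof (Hord y j Hy Hj H).
       destruct (Rle_dec (g y) (g j)), (Rle_dec (p y) (p j)); auto; lra. }
   rewrite (sumR_ext _ _ (fun y => p y - p y * zz m s p y)).
   rewrite (sumR_ext _ (fun y => p y * top_err m s y g') (fun y => p y - p y * zz m s g' y)).
   + rewrite !sumR_minus. assert ((1 <= s)%nat) by lia. assert ((s <= m)%nat) by lia.
     pose proof (topB m s p g' H H0 Hd Hp). lra.
   + intros y Hy. apply in_seq0 in Hy. rewrite top_err_z. ring.
   + intros y Hy. apply in_seq0 in Hy. rewrite top_err_z. unfold zz. rewrite Hn; auto. ring.
Qed.
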